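(* Let $K,\bar M\ge 1$ be integers, $\lambda>0$, $d>0$, $D>0$, and let $\xi_1,\dots,\xi_K$ be independent random variables, each uniformly distributed on $[0,D]$. Consider the array of $K\bar M$ sensors with positions $\zeta_{(k,m)}=\xi_k+(m-1)d$, $k=1,\dots,K$, $m=1,\dots,\bar M$. For an angle $\theta\in(-\pi/2,\pi/2)$ let $\bm g(\theta)\in\mathbb{C}^{K\bar M}$ have entries $\exp(\jmath\frac{2\pi}{\lambda}\zeta_{(k,m)}\sin\theta)$ (with $\jmath=\sqrt{-1}$). For fixed angles $\theta_i,\theta_j$ define $$\mathcal G_{i,j}=\frac{\bm g(\theta_j)^H\bm g(\theta_i)}{\|\bm g(\theta_i)\|_2\,\|\bm g(\theta_j)\|_2},$$ and set $\varphi_{i,j}=\frac{\pi d}{\lambda}(\sin\theta_i-\sin\theta_j)$, $\rho_{i,j}=\frac{\pi D}{\lambda}(\sin\theta_i-\sin\theta_j)$, $\mathcal M_{i,j}=\frac{\sin(\bar M\varphi_{i,j})}{\bar M\sin\varphi_{i,j}}$. Then $$\big|\mathbb{E}[\mathcal G_{i,j}]\big|=|\mathcal M_{i,j}|\cdot\left|\frac{\sin\rho_{i,j}}{\rho_{i,j}}\right|,\qquad \mathbb{E}\big[|\mathcal G_{i,j}|^2\big]=|\mathcal M_{i,j}|^2\left(\frac1K+\Big(1-\frac1K\Big)\left|\frac{\sin\rho_{i,j}}{\rho_{i,j}}\right|^2\right),$$ with $\sin(0)/0$ and $\frac{\sin(\bar M\varphi)}{\bar M\sin\varphi}$ at zeros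 of $\sin\varphi$ interpreted by their limiting values.
   Context: This describes a fully calibrated distributed array of $K$ identical uniform linear subarrays, each with $\bar M$ sensors at spacing $d$; $\xi_k$ is the position of the first sensor of the $k$-th subarray, $D$ the whole array aperture, $\lambda$ the wavelength; $\mathcal G_{i,j}$ is the angular correlation coefficient between steering vectors for directions $\theta_i$ and $\theta_j$. *)

(* Defs.v *)
From HB Require Import structures.
From mathcomp Require Import all_boot all_order all_algebra.
From mathcomp Require Import all_classical all_reals all_analysis.
From mathcomp Require Import complex.
Set Implicit Arguments. Unset Strict Implicit. Unset Printing Implicit Defensive.
Import Order.TTheory GRing.Theory Num.Theory.
Import numFieldNormedType.Exports.
Local Open Scope classical_set_scope.
Local Open Scope ring_scope.
Local Open Scope complex_scope.

Section defs.
Variable R : realType.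

Definition expj (t : R) : R[i] := Complex (cos t) (sin t).

(* position of sensor (k, m) (m is 0-based here: m = 0 .. Mbar-1,
   so m%:R * d = ((m+1)-1) d in the paper's 1-based indexing) *)
Definition sensor_pos (K Mbar : nat) (d : R) (xi : 'I_K -> R)
  (k : 'I_K) (m : 'I_Mbar) : R := xi k + m%:R * d.

Definition steer (K Mbar : nat) (lam d : R) (xi : 'I_K -> R) (th : R)
  (k : 'I_K) (m : 'I_Mbar) : R[i] :=
  expj (2 * pi / lam * sensor_pos d xi k m * sin th).

Definition herm (K Mbar : nat) (u v : 'I_K -> 'I_Mbar -> R[i]) : R[i] :=
  \sum_(k < K) \sum_(m < Mbar) (conjc (u k m) * v k m).

Definition norm2 (K Mbar : nat) (u : 'I_K -> 'I_Mbar -> R[i]) : R :=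
  Num.sqrt (\sum_(k < K) \sum_(m < Mbar) Normc.normc (u k m) ^+ 2).

Definition corr_coef (K Mbar : nat) (lam d : R) (xi : 'I_K -> R)
  (thi thj : R) : R[i] :=
  let gi := @steer K Mbar lam d xi thi in
  let gj := @steer K Mbar lam d xi thj in
  herm gj gi / (norm2 gi * norm2 gj)%:C.

Definition sinc (x : R) : R := if x == 0 then 1 else sin x / x.

(* sin(Mbar phi) / (Mbar sin phi), with its limiting value
   cos(Mbar phi) / cos phi at the zeros of sin phi *)
Definition Mfactor (Mbar : nat) (phi : R) : R :=
  if sin phi == 0 then cos (Mbar%:R * phi) / cos phi
  else sin (Mbar%:R * phi) / (Mbar%:R * sin phi).

End defs.

Definition mutually_independent (d : measure_display) (T : measurableType d)
  (R : realType) (P : probability T R) (n : nat)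
  (X : 'I_n -> {RV P >-> R}) : Prop :=
  forall (J : {set 'I_n}) (A : 'I_n -> set R),
    (forall k, measurable (A k)) ->
    P (\bigcap_(k in [set k | k \in J]) (X k @^-1` A k)) =
    (\prod_(k in J) P (X k @^-1` A k))%E.

Definition cexpectation (d : measure_display) (T : measurableType d)
  (R : realType) (P : probability T R) (Z : T -> R[i]) : R[i] :=
  Complex (fine ('E_P[fun w => complex.Re (Z w)])) (fine ('E_P[fun w => complex.Im (Z w)])).

(* Main.v *)
Require Import Defs.
From HB Require Import structures.
From mathcomp Require Import all_boot all_order all_algebra.
From mathcomp Require Import all_classical all_reals all_analysis.
From mathcomp Require Import complex.
From mathcomp Require Import measurable_realfun.
From mathcomp Require Import ring lra.
Import Order.TTheory GRing.Theory Num.Theory.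
Import numFieldNormedType.Exports.
Local Open Scope classical_set_scope.
Local Open Scope ring_scope.
Set Implicit Arguments. Unset Strict Implicit. Unset Printing Implicit Defensive.

Section Calc.
Context (R : realType).
Local Notation mR := (measurableTypeR R).
Lemma FTC_glob (f F : R -> R) (a b : R) : a < b -> continuous f ->
  (forall x : R, is_derive x (1:R) F (f x)) ->
  (\int[lebesgue_measure]_(x in `[a, b]) (f x)%:E = (F b - F a)%:E)%E.
Proof.
move=> ab cf dF.
have cF : continuous F.
  move=> x; apply/differentiable_continuous/derivable1_diffP.
  exact: (@ex_derive _ _ _ _ _ _ _ (dF x)).
rewrite EFinB; apply: continuous_FTC2 => //.
- exact: continuous_subspaceT.
- split.
  + by move=> x _; exact: (@ex_derive _ _ _ _ _ _ _ (dF x)).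
  + exact/cvg_at_right_filter/cF.
  + exact/cvg_at_left_filter/cF.
- by move=> x _; rewrite derive1E; exact: (@derive_val _ _ _ _ _ _ _ (dF x)).
Qed.

Lemma is_derive_sinM (a x : R) : is_derive x (1:R) (fun y => sin (a * y)) (a * cos (a * x)).
Proof.
have h : is_derive x (1:R) (fun y => a * y) a.
  have := is_deriveZ a (is_derive_id x (1:R)).
  rewrite [X in is_derive _ _ _ X](_ : _ = a); last by rewrite /GRing.scale/= mulr1.
  by [].
rewrite mulrC.
exact: (@is_derive1_comp _ sin (fun y => a * y) x (cos (a * x)) a).
Qed.

Lemma is_derive_cosM (a x : R) : is_derive x (1:R) (fun y => cos (a * y)) (- (a * sin (a * x))).
Proof.
have h : is_derive x (1:R) (fun y => a * y) a.
  have := is_deriveZ a (is_derive_id x (1:R)).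
  rewrite [X in is_derive _ _ _ X](_ : _ = a); last by rewrite /GRing.scale/= mulr1.
  by [].
rewrite -mulrN mulrC.
exact: (@is_derive1_comp _ cos (fun y => a * y) x (- sin (a * x)) a).
Qed.


Lemma is_derive_ext (x : R) (f g : R -> R) (df dg : R) :
  (forall y, f y = g y) -> df = dg -> is_derive x (1:R) f df -> is_derive x (1:R) g dg.
Proof. by move=> /funext -> ->. Qed.

Lemma mcont (f : R -> R) : continuous f -> measurable_fun (setT : set mR) f.
Proof. exact: measurable_realfun.continuous_measurable_fun. Qed.

Lemma cont_cosM (a : R) : continuous (fun x : R => 1 + cos (a * x)).
Proof.
move=> x. apply: continuousD; first exact: cst_continuous.
apply: continuous_comp; last exact: continuous_cos.
apply: continuousM; [exact: cst_continuous | exact: cvg_id].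
Qed.

Lemma cont_sinM (a : R) : continuous (fun x : R => 1 + sin (a * x)).
Proof.
move=> x. apply: continuousD; first exact: cst_continuous.
apply: continuous_comp; last exact: continuous_sin.
apply: continuousM; [exact: cst_continuous | exact: cvg_id].
Qed.

Variables (D : R) (hD : 0 < D).
Local Notation U := (uniform_prob hD).

Definition ec (a : R) := if a == 0 then 1 else sin (a * D) / (a * D).
Definition es (a : R) := if a == 0 then 0 else (1 - cos (a * D)) / (a * D).

Lemma intU_cos (a : R) : (\int[U]_x (1 + cos (a * x))%:E = (1 + ec a)%:E)%E.
Proof.
rewrite integral_uniform//; last first.
  by apply/(measurable_EFinP _ (fun x : R => 1 + cos (a * x))); apply: mcont; exact: cont_cosM.
rewrite subr0.
have hD0 : D != 0 by rewrite gt_eqF.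
rewrite /ec; have [->|/eqP a0] := eqP.
  have dF : forall x : R, is_derive x (1:R) (fun x => 2 * x) (1 + cos (0 * x)).
    move=> x; apply: (@is_derive_ext x (2 \*: id) _ (2 *: (1:R))) => //.
      by rewrite mul0r cos0 /GRing.scale /= mulr1.
  rewrite (FTC_glob hD (@cont_cosM 0) dF).
  by rewrite -EFinM; congr EFin; rewrite mulr0 subr0 mulrCA mulVf // mulr1.
have dF : forall x : R, is_derive x (1:R) (fun x => x + a^-1 * sin (a * x)) (1 + cos (a * x)).
  move=> x; apply: (@is_derive_ext x (id + a^-1 \*: (fun y => sin (a * y))) _ (1 + a^-1 *: (a * cos (a * x)))) => //.
    by congr (_ + _); rewrite -[LHS]/(a^-1 * (a * cos (a * x))) mulrA mulVf // mul1r.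
  by apply: is_deriveD; try exact: is_derive_id; try exact: is_deriveZ (is_derive_sinM a x).
rewrite (FTC_glob hD (@cont_cosM a) dF).
rewrite -EFinM; congr EFin; rewrite mulr0 sin0 mulr0 !addr0 subr0.
by field; apply/andP; split.
Qed.

Lemma intU_sin (a : R) : (\int[U]_x (1 + sin (a * x))%:E = (1 + es a)%:E)%E.
Proof.
rewrite integral_uniform//; last first.
  by apply/(measurable_EFinP _ (fun x : R => 1 + sin (a * x))); apply: mcont; exact: cont_sinM.
rewrite subr0.
have hD0 : D != 0 by rewrite gt_eqF.
rewrite /es; have [->|/eqP a0] := eqP.
  have dF : forall x : R, is_derive x (1:R) (fun x => x) (1 + sin (0 * x)).
    move=> x; apply: (@is_derive_ext x id _ 1) => //.
      by rewrite mul0r sin0 addr0.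
  rewrite (FTC_glob hD (@cont_sinM 0) dF).
  by rewrite -EFinM; congr EFin; rewrite subr0 mulVf // addr0.
have dF : forall x : R, is_derive x (1:R) (fun x => x - a^-1 * cos (a * x)) (1 + sin (a * x)).
  move=> x; apply: (@is_derive_ext x (id + (- a^-1) \*: (fun y => cos (a * y))) _ (1 + (- a^-1) *: (- (a * sin (a * x))))) => //.
      by move=> y; rewrite -[LHS]/(y + (- a^-1) * cos (a * y)) mulNr.
    by congr (_ + _); rewrite -[LHS]/(- a^-1 * (- (a * sin (a * x)))) mulrN mulNr opprK mulrA mulVf // mul1r.
  by apply: is_deriveD; try exact: is_derive_id; try exact: is_deriveZ (is_derive_cosM a x).
rewrite (FTC_glob hD (@cont_sinM a) dF).
rewrite -EFinM; congr EFin; rewrite mulr0 cos0 mulr1.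
by field; apply/andP; split.
Qed.

End Calc.

Section Prob.
Context (R : realType) (dT : measure_display) (T : measurableType dT) (P : probability T R).
Local Notation mR := (measurableTypeR R).

Definition bmf (f : T -> R) := measurable_fun setT f /\ exists M : R, forall w, `|f w| <= M.

Lemma bmf_Lfun f : bmf f -> f \in Lfun P 1.
Proof.
move=> [mf [M hM]]; apply/Lfun1_integrable.
apply: measurable_bounded_integrable => //.
  by rewrite (le_lt_trans (probability_le1 P _)) ?ltry.
exists M; split; first by rewrite num_real.
by move=> N MN x _ /=; rewrite (le_trans (hM x)) // ltW.
Qed.

Definition Ex (f : T -> R) : R := fine ('E_P[f])%E.

Lemma ExE f : bmf f -> ('E_P[f] = (Ex f)%:E)%E.
Proof. by move=> /bmf_Lfun hf; rewrite /Ex fineK // expectation_fin_num. Qed.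

Lemma bmf_cst c : bmf (fun _ => c).
Proof. split; first exact: measurable_cst. by exists `|c|. Qed.

Lemma bmfD f g : bmf f -> bmf g -> bmf (fun w => f w + g w).
Proof.
move=> [mf [M hM]] [mg [N hN]]; split; first exact: measurable_funD.
by exists (M + N) => w; rewrite (le_trans (ler_normD _ _)) // lerD.
Qed.

Lemma bmfM f g : bmf f -> bmf g -> bmf (fun w => f w * g w).
Proof.
move=> [mf [M hM]] [mg [N hN]]; split; first exact: measurable_funM.
exists (M * N) => w; rewrite normrM ler_pM //.
Qed.

Lemma bmf_sum n (F : 'I_n -> T -> R) : (forall i, bmf (F i)) ->
  bmf (fun w => \sum_(i < n) F i w).
Proof.
elim: n F => [|n IH] F hF.
  by under [X in bmf X]funext do rewrite big_ord0; exact: bmf_cst.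
under [X in bmf X]funext do rewrite big_ord_recr /=.
apply: bmfD; last exact: hF.
exact: (IH (fun i => F (widen_ord (leqnSn n) i))).
Qed.

Lemma Ex_cst c : Ex (fun _ => c) = c.
Proof. by rewrite /Ex expectation_cst. Qed.

Lemma ExD f g : bmf f -> bmf g -> Ex (fun w => f w + g w) = Ex f + Ex g.
Proof.
move=> hf hg; rewrite /Ex.
have -> : (fun w => f w + g w) = (f \+ g)%R by [].
by rewrite expectationD ?bmf_Lfun // (ExE hf) (ExE hg).
Qed.

Lemma ExZ k f : bmf f -> Ex (fun w => k * f w) = k * Ex f.
Proof.
move=> hf; rewrite /Ex.
have -> : (fun w => k * f w) = (k \o* f)%R by apply/funext => w /=; rewrite mulrC.
by rewrite expectationZl ?bmf_Lfun // (ExE hf).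
Qed.

Lemma Ex_sum n (F : 'I_n -> T -> R) : (forall i, bmf (F i)) ->
  Ex (fun w => \sum_(i < n) F i w) = \sum_(i < n) Ex (F i).
Proof.
elim: n F => [|n IH] F hF.
  by under [X in Ex X]funext do rewrite big_ord0; rewrite big_ord0 Ex_cst.
under [X in Ex X]funext do rewrite big_ord_recr /=.
rewrite (ExD (bmf_sum (fun i => hF (widen_ord (leqnSn n) i))) (hF ord_max)).
by rewrite big_ord_recr /= (IH (fun i => F (widen_ord (leqnSn n) i))).
Qed.

Lemma Ex_ext f g : f =1 g -> Ex f = Ex g.
Proof. by move=> /funext ->. Qed.

End Prob.
Section S.
Context (R : realType) (dT : measure_display) (T : measurableType dT) (P : probability T R).
Local Notation mR := (measurableTypeR R).

Definition toR' (X : {RV P >-> R}) : T -> mR := fun w => X w.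
Lemma toR'_mes (X : {RV P >-> R}) : measurable_fun setT (toR' X).
Proof. exact: (@measurable_funPT _ _ _ _ X). Qed.
HB.instance Definition _ X := isMeasurableFun.Build _ _ _ _ (toR' X) (toR'_mes X).

Definition pairRV (X Y : {RV P >-> R}) : T -> (mR * mR)%type := fun w => (toR' X w, toR' Y w).
Lemma pairRV_mes X Y : measurable_fun setT (pairRV X Y).
Proof. by apply: measurable_fun_pair; apply: toR'_mes. Qed.
HB.instance Definition _ X Y := isMeasurableFun.Build _ _ _ _ (pairRV X Y) (pairRV_mes X Y).

Variables (D : R) (hD : 0 < D).
Local Notation U := (uniform_prob hD).

Lemma int_single (X : {RV P >-> R})
  (hX : forall A, measurable A -> P (X @^-1` A) = U A)
  (f : R -> R) (mf : measurable_fun (setT : set mR) f) (f0 : forall x, 0 <= f x) :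
  (\int[P]_w (f (X w))%:E = \int[U]_x (f x)%:E)%E.
Proof.
have -> : (\int[P]_w (f (X w))%:E = \int[P]_w ((EFin \o f) \o (toR' X)) w)%E by [].
rewrite -(@ge0_integral_distribution _ _ _ mR _ P (toR' X)); last 2 first.
  exact/measurable_EFinP.
  by move=> y; rewrite /= lee_fin.
apply: eq_measure_integral => A mA _.
by rewrite /distribution /pushforward /= -hX.
Qed.

Lemma int_pair (X Y : {RV P >-> R})
  (hX : forall A, measurable A -> P (X @^-1` A) = U A)
  (hY : forall A, measurable A -> P (Y @^-1` A) = U A)
  (hXY : forall A B, measurable A -> measurable B ->
     P (X @^-1` A `&` Y @^-1` B) = (P (X @^-1` A) * P (Y @^-1` B))%E)
  (f g : R -> R) (mf : measurable_fun (setT : set mR) f) (f0 : forall x, 0 <= f x)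
  (mg : measurable_fun (setT : set mR) g) (g0 : forall x, 0 <= g x) :
  (\int[P]_w (f (X w) * g (Y w))%:E = \int[U]_x (f x)%:E * \int[U]_x (g x)%:E)%E.
Proof.
pose h : (mR * mR)%type -> \bar R := fun z => (f z.1 * g z.2)%:E.
have mh : measurable_fun setT h.
  apply/measurable_EFinP; apply: measurable_funM.
    exact: (measurableT_comp mf measurable_fst).
  exact: (measurableT_comp mg measurable_snd).
have h0 : forall z, (0 <= h z)%E.
  by move=> z; rewrite lee_fin mulr_ge0.
have -> : (\int[P]_w (f (X w) * g (Y w))%:E = \int[P]_w (h \o (pairRV X Y)) w)%E by [].
rewrite -(@ge0_integral_distribution _ _ _ _ _ P (pairRV X Y))//.
rewrite (eq_measure_integral (U \x U)%E); last first.
  move=> A mA _; symmetry; apply: product_measure_unique => // B C mB mC.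
  transitivity (P (X @^-1` B `&` Y @^-1` C)); first by [].
  by rewrite hXY // hX // hY.
rewrite fubini_tonelli1 //.
rewrite /fubini_F /h /=.
under eq_integral => x _.
  rewrite (_ : (\int[U]_y (f x * g y)%:E = (f x)%:E * \int[U]_y (g y)%:E)%E); last first.
    under eq_integral => y _ do rewrite EFinM.
    rewrite ge0_integralZl//.
      exact/measurable_EFinP.
    by move=> y _; rewrite lee_fin.
    by rewrite lee_fin.
  over.
rewrite /= ge0_integralZr//.
  exact/measurable_EFinP.
  by move=> y _; rewrite lee_fin.
by apply: integral_ge0 => y _; rewrite lee_fin.
Qed.
End S.

Section Indep.
Context (R : realType) (dT : measure_display) (T : measurableType dT) (P : probability T R).
Local Notation mR := (measurableTypeR R).
Variables (K : nat) (D : R) (hD : 0 < D) (xi : 'I_K -> {RV P >-> R}).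
Hypothesis xi_unif : forall (k : 'I_K) (A : set R), measurable A ->
     P (xi k @^-1` A) = uniform_prob hD A.
Hypothesis xi_indep : mutually_independent xi.

Lemma indep2 (k l : 'I_K) : k != l -> forall A B, measurable A -> measurable B ->
  P (xi k @^-1` A `&` xi l @^-1` B) = (P (xi k @^-1` A) * P (xi l @^-1` B))%E.
Proof.
move=> kl A B mA mB.
have H := xi_indep; rewrite /mutually_independent in H.
have := H [set k; l]%SET (fun i => if i == k then A else B).
rewrite big_setU1; last by rewrite inE.
rewrite big_set1E.
have Hm : forall i, measurable (if i == k then A else B) by move=> i; case: ifP.
move=> /(_ Hm) H2.
have lk : l != k by rewrite eq_sym.
have E : \bigcap_(i in [set` [set k; l]%SET]) xi i @^-1` (if i == k then A else B)
    = xi k @^-1` A `&` xi l @^-1` B.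
  apply/seteqP; split.
    move=> w hw; split.
      by have := hw k; rewrite /= !inE eqxx => /(_ isT).
    by have := hw l; rewrite /= !inE eqxx orbT (negbTE lk) => /(_ isT).
  move=> w [hk hl] i; rewrite /= !inE => /orP[] /eqP ->; first by rewrite eqxx.
  rewrite (negbTE lk).
  exact: hl.
rewrite E in H2; rewrite H2 /= eqxx (negbTE lk) mule1.
by [].
Qed.
End Indep.

Section Moments.
Context (R : realType) (dT : measure_display) (T : measurableType dT) (P : probability T R).
Local Notation mR := (measurableTypeR R).
Variables (K : nat) (D : R) (hD : 0 < D) (xi : 'I_K -> {RV P >-> R}).
Hypothesis xi_unif : forall (k : 'I_K) (A : set R), measurable A ->
     P (xi k @^-1` A) = uniform_prob hD A.
Hypothesis xi_indep : mutually_independent xi.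
Variable al : R.

Lemma bmf_t (t : R -> R) (ct : continuous t) (bt : forall x, `|t x| <= 1) (k : 'I_K) :
  bmf (fun w => t (al * xi k w)).
Proof.
split; last by exists 1.
apply: (measurableT_comp (f := fun x => t (al * x))); last exact: measurable_funPT.
apply: measurable_realfun.continuous_measurable_fun.
move=> x; apply: continuous_comp; last exact: ct.
apply: continuousM; [exact: cst_continuous | exact: cvg_id].
Qed.

Lemma Ex_gen (t : R -> R) (e : R) (ct : continuous t) (bt : forall x, `|t x| <= 1)
  (ht : (\int[uniform_prob hD]_x (1 + t (al * x))%:E = (1 + e)%:E)%E) :
  (forall k, Ex P (fun w => t (al * xi k w)) = e) /\
  (forall k l, k != l -> Ex P (fun w => t (al * xi k w) * t (al * xi l w)) = e ^+ 2).
Proof.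
have cf : continuous (fun x => 1 + t (al * x)).
  move=> x; apply: continuousD; first exact: cst_continuous.
  apply: continuous_comp; last exact: ct.
  apply: continuousM; [exact: cst_continuous | exact: cvg_id].
have mf : measurable_fun (setT : set mR) (fun x => 1 + t (al * x)).
  exact: measurable_realfun.continuous_measurable_fun.
have f0 : forall x, 0 <= 1 + t (al * x).
  move=> x; rewrite -lerBlDl sub0r.
  by have := bt (al * x); rewrite ler_norml => /andP[].
have b1 : bmf (fun _ : T => 1:R) := bmf_cst _ 1.
have E1 k : Ex P (fun w => 1 + t (al * xi k w)) = 1 + e.
  rewrite /Ex unlock /=.
  by rewrite (int_single (xi_unif k) mf f0) ht.
have Ek k : Ex P (fun w => t (al * xi k w)) = e.
  by have := E1 k; rewrite ExD ?Ex_cst //; [move/addrI | exact: bmf_t].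
split=> [k|k l kl]; first exact: Ek.
have E2 : Ex P (fun w => (1 + t (al * xi k w)) * (1 + t (al * xi l w))) = (1 + e) * (1 + e).
  rewrite /Ex unlock /=.
  rewrite (int_pair (xi_unif k) (xi_unif l) (indep2 xi_indep kl) mf f0 mf f0) ht.
  by [].
move: E2.
rewrite (@Ex_ext _ _ _ _ _ (fun w => (1 + (t (al * xi k w) + t (al * xi l w))) + t (al * xi k w) * t (al * xi l w))); last first.
  by move=> w /=; ring.
have bk := bmf_t ct bt k; have bl := bmf_t ct bt l.
rewrite ExD; last 2 first.
  by apply: bmfD => //; apply: bmfD.
  exact: bmfM.
rewrite ExD ?Ex_cst //; last exact: bmfD.
rewrite ExD // Ek Ek => h.
apply: (addrI (1 + (e + e))); rewrite h; ring.
Qed.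
End Moments.
Section Cx.
Local Open Scope complex_scope.
Context (R : realType).

Lemma addC (a b c d : R) : (a +i* b) + (c +i* d) = (a + c) +i* (b + d).
Proof. by []. Qed.

Lemma mulC (a b c d : R) : (a +i* b) * (c +i* d) = (a * c - b * d) +i* (a * d + b * c).
Proof. by []. Qed.

Lemma sum_complex n (f g : 'I_n -> R) :
  \sum_(i < n) (f i +i* g i) = (\sum_(i < n) f i) +i* (\sum_(i < n) g i).
Proof.
elim: n f g => [|n IH] f g; first by rewrite !big_ord0.
by rewrite !big_ord_recr /= IH addC.
Qed.

Lemma expjD (x y : R) : expj (x + y) = expj x * expj y.
Proof. rewrite /expj mulC cosD sinD; congr (_ +i* _); ring. Qed.

Lemma conj_expj (x : R) : conjc (expj x) = expj (- x).
Proof. by rewrite /expj /conjc cosN sinN. Qed.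

Lemma normc_expj (x : R) : Normc.normc (expj x) = 1.
Proof. by rewrite /expj /= cos2Dsin2 sqrtr1. Qed.

Lemma divC_real (z : R[i]) (r : R) : r != 0 -> z / r%:C = (complex.Re z / r) +i* (complex.Im z / r).
Proof.
move=> r0; rewrite -fmorphV; case: z => x y.
rewrite mulC /=. congr (_ +i* _); ring.
Qed.

Lemma sin_mul0 (x : R) n : sin x = 0 -> sin (n%:R * x) = 0.
Proof.
move=> sx; elim: n => [|n IH]; first by rewrite mul0r sin0.
rewrite (_ : n.+1%:R * x = n%:R * x + x); last by rewrite -addn1 natrD mulrDl mul1r.
by rewrite sinD IH sx mul0r mulr0 addr0.
Qed.

Lemma cos_mul1 (x : R) n : sin x = 0 -> cos (n%:R * x) ^+ 2 = 1.
Proof. by move=> sx; rewrite cos2sin2 (sin_mul0 n sx) expr0n subr0. Qed.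

Lemma normc_expj2 (y : R) : Normc.normc (expj (2 * y) - 1) ^+ 2 = 4 * sin y ^+ 2.
Proof.
rewrite /expj (_ : 2 * y = y + y); last by ring.
rewrite cosD sinD /= sqr_sqrtr; last by rewrite addr_ge0 // sqr_ge0.
have h : cos y ^+ 2 = 1 - sin y ^+ 2 by rewrite cos2sin2.
rewrite (_ : (cos y * cos y - sin y * sin y - 1) ^+ 2 + (sin y * cos y + cos y * sin y - 0) ^+ 2
   = (cos y ^+ 2 - sin y ^+ 2 - 1) ^+ 2 + 4 * sin y ^+ 2 * cos y ^+ 2); last by ring.
rewrite h; ring.
Qed.

Lemma geom_norm (x : R) M : (0 < M)%N ->
  (\sum_(m < M) cos (m%:R * (2 * x))) ^+ 2 + (\sum_(m < M) sin (m%:R * (2 * x))) ^+ 2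
  = (M%:R * Mfactor M x) ^+ 2.
Proof.
move=> M0.
set a := \sum_(m < M) cos _; set b := \sum_(m < M) sin _.
have hA : \sum_(m < M) expj (m%:R * (2 * x)) = a +i* b by rewrite /expj sum_complex.
have nA : Normc.normc (a +i* b) ^+ 2 = a ^+ 2 + b ^+ 2.
  by rewrite /= sqr_sqrtr // addr_ge0 // sqr_ge0.
have M0' : M%:R != 0 :> R by rewrite pnatr_eq0 -lt0n.
rewrite /Mfactor; have [/eqP sx|sx] := ifPn.
  have e1 m : cos (m%:R * (2 * x)) = 1.
    rewrite (_ : m%:R * (2 * x) = m%:R * x + m%:R * x); last by ring.
    by rewrite cosD (sin_mul0 m sx) mulr0 subr0 -expr2 cos_mul1.
  have e2 m : sin (m%:R * (2 * x)) = 0.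
    rewrite (_ : m%:R * (2 * x) = m%:R * x + m%:R * x); last by ring.
    by rewrite sinD (sin_mul0 m sx) mulr0 mul0r addr0.
  have -> : a = M%:R.
    by rewrite /a (eq_bigr (fun _ => 1)) ?sumr_const ?card_ord // => i _; exact: e1.
  have -> : b = 0 by rewrite /b big1 // => i _; exact: e2.
  rewrite expr0n addr0 /= exprMn expr_div_n.
  have c1 := cos_mul1 1 sx; rewrite mul1r in c1.
  by rewrite c1 (cos_mul1 M sx) divr1 mulr1.
have tel : (\sum_(m < M) expj (m%:R * (2 * x))) * (expj (2 * x) - 1)
    = expj (M%:R * (2 * x)) - expj (0%:R * (2 * x)).
  rewrite mulr_suml -(big_mkord xpredT (fun m => expj (m%:R * (2 * x)) * (expj (2 * x) - 1))).
  apply: (telescope_sumr_eq (fun m => expj (m%:R * (2 * x)))) => // k _.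
  rewrite mulrBr mulr1 -expjD; congr (expj _ - _).
  by rewrite -addn1 natrD; ring.
move: tel; rewrite hA mul0r => /(congr1 (fun z => Normc.normc z ^+ 2)).
rewrite Normc.normcM exprMn nA (_ : M%:R * (2 * x) = 2 * (M%:R * x)); last by ring.
rewrite (_ : expj 0 = 1); last by rewrite /expj cos0 sin0.
rewrite !normc_expj2 => h.
have s2 : sin x ^+ 2 != 0 by rewrite expf_neq0.
apply: (mulIf (_ : 4 * sin x ^+ 2 != 0)); first by rewrite mulf_neq0 // pnatr_eq0.
rewrite h; field.
by apply/andP; split.
Qed.
End Cx.

Lemma sinc_sq (R : realType) (D al : R) : 0 < D ->
  ec D al ^+ 2 + es D al ^+ 2 = sinc (al * D / 2) ^+ 2.
Proof.
move=> hD; rewrite /ec /es /sinc.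
have [->|a0] := eqP; first by rewrite !mul0r eqxx expr0n addr0.
have r0 : al * D / 2 != 0.
  by apply: mulf_neq0; [apply: mulf_neq0; [apply/eqP | rewrite gt_eqF] | rewrite invr_eq0 pnatr_eq0].
rewrite (negbTE r0).
set r := al * D / 2.
have -> : al * D = r + r by rewrite /r; field.
rewrite sinD cosD.
have h : cos r ^+ 2 = 1 - sin r ^+ 2 by rewrite cos2sin2.
have r2 : r + r != 0 by rewrite -mulr2n mulrn_eq0 negb_or r0.
rewrite (_ : (sin r * cos r + cos r * sin r) / (r + r) = sin r * cos r / r); last by field; rewrite r0 r2.
rewrite (_ : (1 - (cos r * cos r - sin r * sin r)) / (r + r) = (1 - cos r ^+ 2 + sin r ^+ 2) / (2 * r)); last first.
  by field; rewrite r0 r2.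
have -> : (sin r * cos r / r) ^+ 2 = sin r ^+ 2 * cos r ^+ 2 / r ^+ 2.
  by rewrite expr_div_n exprMn.
rewrite h; field.
by rewrite r0.
Qed.

Section Det.
Context (R : realType).
Local Open Scope complex_scope.

Lemma norm2_steer K M (lam d : R) (x : 'I_K -> R) th :
  norm2 (@steer R K M lam d x th) = Num.sqrt (K * M)%:R.
Proof.
rewrite /norm2; congr Num.sqrt.
under eq_bigr do under eq_bigr do rewrite /steer normc_expj expr1n.
rewrite sumr_const card_ord sumr_const card_ord.
by rewrite natrM mulr_natl.
Qed.

Lemma corr_coefE K M (lam d : R) (x : 'I_K -> R) thi thj : (0 < K)%N -> (0 < M)%N ->
  let al := 2 * pi / lam * (sin thi - sin thj) in
  let ph := pi * d / lam * (sin thi - sin thj) in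
  let a := \sum_(m < M) cos (m%:R * (2 * ph)) in
  let b := \sum_(m < M) sin (m%:R * (2 * ph)) in
  let Cs := \sum_(k < K) cos (al * x k) in
  let Ss := \sum_(k < K) sin (al * x k) in
  @corr_coef R K M lam d x thi thj =
  ((Cs * a - Ss * b) / (K * M)%:R) +i* ((Cs * b + Ss * a) / (K * M)%:R).
Proof.
move=> K0 M0 al ph a b Cs Ss.
rewrite /corr_coef !norm2_steer -expr2 sqr_sqrtr ?ler0n //.
have -> : herm (@steer R K M lam d x thj) (@steer R K M lam d x thi) =
    (\sum_(k < K) expj (al * x k)) * (\sum_(m < M) expj (m%:R * (2 * ph))).
  rewrite /herm mulr_suml; apply: eq_bigr => k _.
  rewrite mulr_sumr; apply: eq_bigr => m _.
  rewrite /steer conj_expj -!expjD /sensor_pos /al /ph; congr expj.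
  ring.
have N0 : (K * M)%:R != 0 :> R by rewrite pnatr_eq0 -lt0n muln_gt0 K0 M0.
rewrite /expj !sum_complex mulC /Cs /Ss /a /b expr0n addr0 mul0r oppr0 !mulr0 subr0 add0r.
by congr (_ +i* _); field; rewrite !pnatr_eq0 -!lt0n K0 M0.
Qed.
End Det.

Unset Implicit Arguments. Set Strict Implicit. Set Printing Implicit Defensive.

Lemma sqr_sum (R : realType) n (f : 'I_n -> R) :
  (\sum_(k < n) f k) ^+ 2 = \sum_(k < n) \sum_(l < n) f k * f l.
Proof. by rewrite expr2 mulr_suml; apply: eq_bigr => k _; rewrite mulr_sumr. Qed.

Theorem proposition2 (R : realType) (dT : measure_display) (T : measurableType dT)
  (P : probability T R) (K Mbar : nat) (lam d D : R) (thi thj : R)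
  (hK : (0 < K)%N) (hM : (0 < Mbar)%N)
  (hlam : 0 < lam) (hd : 0 < d) (hD : 0 < D)
  (hthi : - (pi / 2) < thi < pi / 2) (hthj : - (pi / 2) < thj < pi / 2)
  (xi : 'I_K -> {RV P >-> R})
  (xi_unif : forall (k : 'I_K) (A : set R), measurable A ->
     P (xi k @^-1` A) = uniform_prob hD A)
  (xi_indep : mutually_independent xi) :
  let G := fun w : T => @corr_coef R K Mbar lam d (fun k => xi k w) thi thj in
  let phi := pi * d / lam * (sin thi - sin thj) in
  let rho := pi * D / lam * (sin thi - sin thj) in
  Normc.normc (cexpectation P G) = `|Mfactor Mbar phi| * `|sinc rho|
  /\
  ('E_P[fun w => (Normc.normc (G w) ^+ 2)%R] =
   (`|Mfactor Mbar phi| ^+ 2 *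
    (K%:R^-1 + (1 - K%:R^-1) * `|sinc rho| ^+ 2))%:E)%E.
Proof.
move=> G phi rho.
set al := 2 * pi / lam * (sin thi - sin thj).
set a := \sum_(m < Mbar) cos (m%:R * (2 * phi)).
set b := \sum_(m < Mbar) sin (m%:R * (2 * phi)).
set N : R := (K * Mbar)%:R.
have K0 : K%:R != 0 :> R by rewrite pnatr_eq0 -lt0n.
have M0 : Mbar%:R != 0 :> R by rewrite pnatr_eq0 -lt0n.
have N0 : N != 0 by rewrite /N natrM mulf_neq0.
pose c k w := cos (al * xi k w).
pose s k w := sin (al * xi k w).
have GE w : G w = Complex
   (((\sum_(k < K) c k w) * a - (\sum_(k < K) s k w) * b) / N)
   (((\sum_(k < K) c k w) * b + (\sum_(k < K) s k w) * a) / N).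
  exact: (corr_coefE lam d (fun k => xi k w) thi thj hK hM).
have [Ec Ecc] := Ex_gen xi_unif xi_indep (@continuous_cos R) (@cos_max R) (intU_cos hD al).
have [Es Ess] := Ex_gen xi_unif xi_indep (@continuous_sin R) (@sin_max R) (intU_sin hD al).
have bc k : bmf (c k) := bmf_t xi al (@continuous_cos R) (@cos_max R) k.
have bs k : bmf (s k) := bmf_t xi al (@continuous_sin R) (@sin_max R) k.
have ab : a ^+ 2 + b ^+ 2 = (Mbar%:R * Mfactor Mbar phi) ^+ 2 := geom_norm phi hM.
have lam0 : lam != 0 by rewrite gt_eqF.
have rhoE : al * D / 2 = rho by rewrite /al /rho; field.
have q : ec D al ^+ 2 + es D al ^+ 2 = sinc rho ^+ 2 by rewrite sinc_sq // rhoE.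
have bC : bmf (fun w => \sum_(k < K) c k w) := bmf_sum bc.
have bS : bmf (fun w => \sum_(k < K) s k w) := bmf_sum bs.
have bZC r : bmf (fun w => r * \sum_(k < K) c k w) := bmfM (bmf_cst _ r) bC.
have bZS r : bmf (fun w => r * \sum_(k < K) s k w) := bmfM (bmf_cst _ r) bS.
have EC : Ex P (fun w => \sum_(k < K) c k w) = K%:R * ec D al.
  rewrite Ex_sum // (eq_bigr (fun _ => ec D al)); last by move=> k _; exact: Ec.
  by rewrite sumr_const card_ord mulr_natl.
have ES : Ex P (fun w => \sum_(k < K) s k w) = K%:R * es D al.
  rewrite Ex_sum // (eq_bigr (fun _ => es D al)); last by move=> k _; exact: Es.
  by rewrite sumr_const card_ord mulr_natl.
split.
  rewrite /cexpectation.
  have hRe : (fun w => complex.Re (G w)) =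
      (fun w => (a / N) * (\sum_(k < K) c k w) + (- (b / N)) * (\sum_(k < K) s k w)).
    by apply/funext => w; rewrite GE /=; field; rewrite ?M0 ?K0.
  have hIm : (fun w => complex.Im (G w)) =
      (fun w => (b / N) * (\sum_(k < K) c k w) + (a / N) * (\sum_(k < K) s k w)).
    by apply/funext => w; rewrite GE /=; field; rewrite ?M0 ?K0.
  have ExRe : Ex P (fun w => (a / N) * (\sum_(k < K) c k w) + (- (b / N)) * (\sum_(k < K) s k w))
      = a / N * (K%:R * ec D al) - b / N * (K%:R * es D al).
    by rewrite ExD // !ExZ // EC ES mulNr.
  have ExIm : Ex P (fun w => (b / N) * (\sum_(k < K) c k w) + (a / N) * (\sum_(k < K) s k w))
      = b / N * (K%:R * ec D al) + a / N * (K%:R * es D al).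
    by rewrite ExD // !ExZ // EC ES.
  rewrite /Ex in ExRe ExIm.
  rewrite hRe hIm ExRe ExIm /=.
  rewrite -[X in Num.sqrt X = _](_ : (`|Mfactor Mbar phi| * `|sinc rho|) ^+ 2 = _).
    by rewrite sqrtr_sqr ger0_norm // mulr_ge0.
  rewrite exprMn !real_normK ?num_real // -q.
  rewrite (_ : Mfactor Mbar phi ^+ 2 = (a ^+ 2 + b ^+ 2) / Mbar%:R ^+ 2); last first.
    by rewrite ab; field; rewrite ?M0 ?K0.
  by rewrite /N natrM; field; rewrite ?M0 ?K0.
have hN : (fun w => Normc.normc (G w) ^+ 2) = (fun w => ((a ^+ 2 + b ^+ 2) / N ^+ 2) *
    \sum_(k < K) \sum_(l < K) (c k w * c l w + s k w * s l w)).
  apply/funext => w; rewrite GE /= sqr_sqrtr ?addr_ge0 ?sqr_ge0 //.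
  have -> : \sum_(k < K) \sum_(l < K) (c k w * c l w + s k w * s l w) =
      (\sum_(k < K) c k w) ^+ 2 + (\sum_(k < K) s k w) ^+ 2.
    by rewrite !sqr_sum -big_split; apply: eq_bigr => k _; rewrite -big_split.
  by field; rewrite ?M0 ?K0.
have bkl k l : bmf (fun w => c k w * c l w + s k w * s l w).
  exact: bmfD (bmfM (bc k) (bc l)) (bmfM (bs k) (bs l)).
rewrite hN ExE; last first.
  exact: bmfM (bmf_cst _ _) (bmf_sum (fun k => bmf_sum (fun l => bkl k l))).
congr EFin.
rewrite ExZ; last exact: (bmf_sum (fun k => bmf_sum (fun l => bkl k l))).
rewrite Ex_sum; last by move=> k; exact: (bmf_sum (fun l => bkl k l)).
have Ekl k l : Ex P (fun w => c k w * c l w + s k w * s l w) = if k == l then 1 else sinc rho ^+ 2.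
  case: eqP => [<-|/eqP kl].
    rewrite (@Ex_ext _ _ _ _ _ (fun _ => 1)) ?Ex_cst // => w.
    by rewrite -!expr2 /c /s cos2Dsin2.
  by rewrite ExD ?Ecc ?Ess ?q //; apply: bmfM.
have Sl k : \sum_(l < K) Ex P (fun w => c k w * c l w + s k w * s l w) =
    K%:R * sinc rho ^+ 2 + (1 - sinc rho ^+ 2).
  rewrite (eq_bigr (fun l => sinc rho ^+ 2 + (if l == k then 1 - sinc rho ^+ 2 else 0))); last first.
    by move=> l _; rewrite Ekl eq_sym; case: ifP => _; ring.
  by rewrite big_split /= sumr_const card_ord mulr_natl -big_mkcond /= big_pred1_eq.
rewrite (eq_bigr (fun _ => K%:R * sinc rho ^+ 2 + (1 - sinc rho ^+ 2))); last first.
  by move=> k _; rewrite Ex_sum // => l; exact: bkl.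
rewrite sumr_const card_ord -mulr_natl !real_normK ?num_real //.
rewrite (_ : Mfactor Mbar phi ^+ 2 = (a ^+ 2 + b ^+ 2) / Mbar%:R ^+ 2); last first.
  by rewrite ab; field; rewrite ?M0 ?K0.
by rewrite /N natrM; field; rewrite ?M0 ?K0.
Qed.
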